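(* Suppose $T\in L_{aut}(\mathcal B)$ has the shadowing property and is not hyperbolic. Then for every $\varepsilon>0$ there is $x\in\mathcal B$ such that $1-\varepsilon<|T^nx|<1+\varepsilon$ for every $n\in\mathbb Z$.
   Context: $\mathcal B$ is a Banach space. A $\delta$-pseudo-orbit is a sequence $(x_n)_{n\in\mathbb Z}$ with $|x_{n+1}-Tx_n|<\delta$; $y$ $\varepsilon$-shadows it if $|x_n-T^ny|<\varepsilon$ for all $n$. $T$ has the shadowing property if for every $\varepsilon>0$ there is $\delta>0$ such that every $\delta$-pseudo-orbit is $\varepsilon$-shadowed by some point. $T$ is hyperbolic if its spectrum does not meet the unit circle. *)

(* Defs.v *)
From Stdlib Require Import Reals ZArith.
Open Scope R_scope.

Record RBanach := {
  bcar :> Type;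
  bzero : bcar;
  badd : bcar -> bcar -> bcar;
  bopp : bcar -> bcar;
  bscal : R -> bcar -> bcar;
  bnorm : bcar -> R;
  badd_assoc : forall x y z, badd x (badd y z) = badd (badd x y) z;
  badd_comm : forall x y, badd x y = badd y x;
  badd_zero : forall x, badd x bzero = x;
  badd_opp : forall x, badd x (bopp x) = bzero;
  bscal_one : forall x, bscal 1 x = x;
  bscal_assoc : forall a b x, bscal a (bscal b x) = bscal (a * b) x;
  bscal_distr_l : forall a x y, bscal a (badd x y) = badd (bscal a x) (bscal a y);
  bscal_distr_r : forall a b x, bscal (a + b) x = badd (bscal a x) (bscal b x);
  bnorm_nonneg : forall x, 0 <= bnorm x;
  bnorm_eq0 : forall x, bnorm x = 0 -> x = bzero;
  bnorm_scal : forall a x, bnorm (bscal a x) = Rabs a * bnorm x;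
  bnorm_triangle : forall x y, bnorm (badd x y) <= bnorm x + bnorm y;
  bcomplete : forall u : nat -> bcar,
    (forall eps, eps > 0 -> exists N, forall m n, (m >= N)%nat -> (n >= N)%nat ->
        bnorm (badd (u m) (bopp (u n))) < eps) ->
    exists l, forall eps, eps > 0 -> exists N, forall n, (n >= N)%nat ->
        bnorm (badd (u n) (bopp l)) < eps
}.

Arguments bzero {_}.
Arguments badd {_}.
Arguments bopp {_}.
Arguments bscal {_}.
Arguments bnorm {_}.

Definition bsub {B : RBanach} (x y : B) : B := badd x (bopp y).

Definition bounded_linear {B : RBanach} (T : B -> B) : Prop :=
  (forall x y, T (badd x y) = badd (T x) (T y)) /\
  (forall a x, T (bscal a x) = bscal a (T x)) /\
  (exists C, forall x, bnorm (T x) <= C * bnorm x).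

Definition is_aut_with_inverse {B : RBanach} (T S : B -> B) : Prop :=
  bounded_linear T /\ bounded_linear S /\
  (forall x, T (S x) = x) /\ (forall x, S (T x) = x).

Definition zpow {B : RBanach} (T S : B -> B) (n : Z) (x : B) : B :=
  match n with
  | Z0 => x
  | Zpos p => Nat.iter (Pos.to_nat p) T x
  | Zneg p => Nat.iter (Pos.to_nat p) S x
  end.

Definition pseudo_orbit {B : RBanach} (T : B -> B) (delta : R) (x : Z -> B) : Prop :=
  forall n : Z, bnorm (bsub (x (n + 1)%Z) (T (x n))) < delta.

Definition eps_shadows {B : RBanach} (T S : B -> B) (eps : R) (y : B) (x : Z -> B) : Prop :=
  forall n : Z, bnorm (bsub (x n) (zpow T S n y)) < eps.

Definition shadowing_property {B : RBanach} (T S : B -> B) : Prop :=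
  forall eps, eps > 0 -> exists delta, delta > 0 /\
    forall x : Z -> B, pseudo_orbit T delta x -> exists y, eps_shadows T S eps y x.

(* The complexified operator T_C - lambda, lambda = a + i b, acting on
   B_C = B x B via (x + i y) |-> (Tx - a x + b y) + i (Ty - b x - a y). *)
Definition complexified_shift {B : RBanach} (T : B -> B) (a b : R) (p : B * B) : B * B :=
  let (x, y) := p in
  (badd (bsub (T x) (bscal a x)) (bscal b y),
   bsub (bsub (T y) (bscal b x)) (bscal a y)).

(* lambda = a + i b is in the spectrum of T iff T_C - lambda is not bijective
   (for bounded operators bijectivity = invertibility in L(B_C), open mapping). *)
Definition in_spectrum {B : RBanach} (T : B -> B) (a b : R) : Prop :=
  ~ ((forall p q, complexified_shift T a b p = complexified_shift T a b q -> p = q) /\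
     (forall r, exists p, complexified_shift T a b p = r)).

Definition hyperbolic {B : RBanach} (T : B -> B) : Prop :=
  forall a b : R, a * a + b * b = 1 -> ~ in_spectrum T a b.

(* Main.v *)
Require Import Defs.
From Stdlib Require Import Reals ZArith Lra Lia Classical.
Open Scope R_scope.

Arguments badd_assoc {r}. Arguments badd_comm {r}. Arguments badd_zero {r}.
Arguments badd_opp {r}. Arguments bscal_one {r}. Arguments bscal_assoc {r}.
Arguments bscal_distr_l {r}. Arguments bscal_distr_r {r}. Arguments bnorm_nonneg {r}.
Arguments bnorm_eq0 {r}. Arguments bnorm_scal {r}. Arguments bnorm_triangle {r}.

Section Gen.
Context {E : RBanach}.

Lemma add0l (x : E) : badd bzero x = x.
Proof. rewrite badd_comm; apply badd_zero. Qed.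

Lemma add_cancel (a b : E) : badd a b = a -> b = bzero.
Proof.
  intros H.
  assert (b = badd (badd b a) (bopp a)) as ->.
  { rewrite <- badd_assoc, badd_opp, badd_zero; reflexivity. }
  rewrite (badd_comm b a), H, badd_opp; reflexivity.
Qed.

Lemma opp_unique (x y : E) : badd x y = bzero -> y = bopp x.
Proof.
  intros H.
  assert (y = badd (badd y x) (bopp x)) as ->.
  { rewrite <- badd_assoc, badd_opp, badd_zero; reflexivity. }
  rewrite (badd_comm y x), H, add0l; reflexivity.
Qed.

Lemma scal0l (x : E) : bscal 0 x = bzero.
Proof.
  apply (add_cancel (bscal 0 x)).
  rewrite <- bscal_distr_r, Rplus_0_r; reflexivity.
Qed.

Lemma scal0r (a : R) : bscal a (@bzero E) = bzero.
Proof.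
  rewrite <- (scal0l bzero), bscal_assoc, Rmult_0_r; reflexivity.
Qed.

Lemma opp_scal (x : E) : bopp x = bscal (-1) x.
Proof.
  symmetry; apply opp_unique.
  rewrite <- (bscal_one x) at 1.
  rewrite <- bscal_distr_r, Rplus_opp_r; apply scal0l.
Qed.

Lemma norm0 : bnorm (@bzero E) = 0.
Proof. rewrite <- (scal0l bzero), bnorm_scal, Rabs_R0; ring. Qed.

Lemma norm_opp (x : E) : bnorm (bopp x) = bnorm x.
Proof.
  rewrite opp_scal, bnorm_scal, Rabs_left by lra; ring.
Qed.

Lemma opp_add (x y : E) : bopp (badd x y) = badd (bopp x) (bopp y).
Proof. rewrite !opp_scal, bscal_distr_l; reflexivity. Qed.

Lemma opp_opp (x : E) : bopp (bopp x) = x.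
Proof. rewrite !opp_scal, bscal_assoc.
  replace (-1 * -1) with 1 by ring; apply bscal_one. Qed.

Lemma sub_self (x : E) : bsub x x = bzero.
Proof. apply badd_opp. Qed.

Lemma scal_opp (a : R) (x : E) : bscal a (bopp x) = bscal (-a) x.
Proof. rewrite opp_scal, bscal_assoc; f_equal; ring. Qed.

Lemma opp_scal' (a : R) (x : E) : bopp (bscal a x) = bscal (-a) x.
Proof. rewrite opp_scal, bscal_assoc; f_equal; ring. Qed.

Lemma add_swap (x y z : E) : badd x (badd y z) = badd y (badd x z).
Proof. rewrite !badd_assoc, (badd_comm x y); reflexivity. Qed.

Lemma norm_sub_sym (x y : E) : bnorm (bsub x y) = bnorm (bsub y x).
Proof.
  unfold bsub. rewrite <- norm_opp, opp_add, opp_opp, badd_comm; reflexivity.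
Qed.

Lemma sub_split (x y z : E) : bsub x z = badd (bsub x y) (bsub y z).
Proof.
  unfold bsub. rewrite <- badd_assoc, (badd_assoc (bopp y) y), (badd_comm (bopp y) y),
    badd_opp, add0l; reflexivity.
Qed.

Lemma norm_sub_tri (x y z : E) : bnorm (bsub x z) <= bnorm (bsub x y) + bnorm (bsub y z).
Proof. rewrite (sub_split x y z); apply bnorm_triangle. Qed.

Lemma sub_eq0 (x y : E) : bnorm (bsub x y) = 0 -> x = y.
Proof.
  intros H. apply bnorm_eq0 in H. unfold bsub in H.
  apply opp_unique in H. rewrite <- (opp_opp x), <- H, opp_opp; reflexivity.
Qed.

Lemma norm_rev (x y : E) : bnorm x - bnorm y <= bnorm (bsub x y).
Proof.
  assert (x = badd (bsub x y) y) as Hx.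
  { unfold bsub; rewrite <- badd_assoc, (badd_comm (bopp y)), badd_opp, badd_zero; reflexivity. }
  pose proof (bnorm_triangle (bsub x y) y). rewrite <- Hx in H. lra.
Qed.

Lemma sub0r (x : E) : bsub x bzero = x.
Proof. unfold bsub. rewrite opp_scal, scal0r, badd_zero; reflexivity. Qed.

Lemma sub_scal (a : R) (x y : E) : bsub (bscal a x) (bscal a y) = bscal a (bsub x y).
Proof. unfold bsub. rewrite bscal_distr_l, scal_opp, opp_scal'; reflexivity. Qed.

Lemma sub_add_add (a b c d : E) : bsub (badd a b) (badd c d) = badd (bsub a c) (bsub b d).
Proof.
  unfold bsub. rewrite opp_add, !badd_assoc; f_equal.
  rewrite <- !badd_assoc; f_equal. apply badd_comm.
Qed.

Definition additive (f : E -> E) := forall x y, f (badd x y) = badd (f x) (f y).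
Definition homog (f : E -> E) := forall a x, f (bscal a x) = bscal a (f x).

Lemma lin_zero f : homog f -> f bzero = bzero.
Proof. intros H. rewrite <- (scal0l bzero) at 1. rewrite H, scal0l; reflexivity. Qed.

Lemma lin_opp f : homog f -> forall x, f (bopp x) = bopp (f x).
Proof. intros H x. rewrite !opp_scal, H; reflexivity. Qed.

Lemma lin_sub f : additive f -> homog f -> forall x y, f (bsub x y) = bsub (f x) (f y).
Proof. intros Ha Hh x y. unfold bsub. rewrite Ha, lin_opp; auto. Qed.

Fixpoint sumN (f : nat -> E) (n : nat) : E :=
  match n with O => bzero | S k => badd (sumN f k) (f k) end.

Lemma sumN_lin f g n : additive f -> homog f -> f (sumN g n) = sumN (fun k => f (g k)) n.
Proof.
  intros Ha Hh; induction n; simpl. apply lin_zero; auto.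
  rewrite Ha, IHn; reflexivity.
Qed.

Lemma sumN_scal a g n : bscal a (sumN g n) = sumN (fun k => bscal a (g k)) n.
Proof.
  induction n; simpl. apply scal0r. rewrite bscal_distr_l, IHn; reflexivity.
Qed.

Lemma sumN_tele (g : nat -> E) n : sumN (fun k => bsub (g (S k)) (g k)) n = bsub (g n) (g O).
Proof.
  induction n; simpl. symmetry; apply sub_self.
  rewrite IHn, badd_comm, <- sub_split; reflexivity.
Qed.

Lemma sumN_sub f g n : sumN (fun k => bsub (f k) (g k)) n = bsub (sumN f n) (sumN g n).
Proof.
  induction n; simpl. rewrite sub0r; reflexivity.
  rewrite IHn, sub_add_add; reflexivity.
Qed.

Lemma sumN_const (p : E) n : sumN (fun _ => p) n = bscal (INR n) p.
Proof.
  induction n; simpl. symmetry; apply scal0l.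
  rewrite IHn. rewrite <- (bscal_one p) at 2. rewrite <- bscal_distr_r.
  f_equal. destruct n; simpl; ring.
Qed.

Lemma sumN_norm (f : nat -> E) n M : (forall k, (k < n)%nat -> bnorm (f k) <= M) ->
  bnorm (sumN f n) <= INR n * M.
Proof.
  induction n; intros H; cbn [sumN]. rewrite norm0; simpl; lra.
  eapply Rle_trans. apply bnorm_triangle.
  rewrite S_INR. assert (bnorm (sumN f n) <= INR n * M) by (apply IHn; intros; apply H; lia).
  assert (bnorm (f n) <= M) by (apply H; lia). lra.
Qed.

End Gen.

Section Shad.
Context {E : RBanach} (T S : E -> E).
Hypothesis TA : additive T. Hypothesis TH : homog T.
Hypothesis SA : additive S. Hypothesis SH : homog S.

Lemma iter_scal (f : E -> E) : homog f -> forall k c y, Nat.iter k f (bscal c y) = bscal c (Nat.iter k f y).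
Proof. intros H k c y; induction k; simpl; auto. rewrite IHk; auto. Qed.

Lemma zpow_scal n c y : zpow T S n (bscal c y) = bscal c (zpow T S n y).
Proof. destruct n; simpl; auto; apply iter_scal; auto. Qed.

Lemma shadow_scaled : shadowing_property T S -> exists K, K > 0 /\
  forall eta, eta > 0 -> forall x : Z -> E, (forall n, bnorm (bsub (x (n+1)%Z) (T (x n))) < eta) ->
  exists y, forall n, bnorm (bsub (x n) (zpow T S n y)) < K * eta.
Proof.
  intros Hs. destruct (Hs 1 Rlt_0_1) as [d [Hd Hsh]].
  exists (/ d). split. apply Rinv_0_lt_compat; auto.
  intros eta Heta x Hx.
  set (s := d / eta).
  assert (Hs0 : s > 0) by (unfold s; apply Rdiv_lt_0_compat; auto).
  destruct (Hsh (fun n => bscal s (x n))) as [y' Hy'].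
  { intros n. rewrite TH, sub_scal, bnorm_scal, Rabs_right by lra.
    specialize (Hx n). unfold s.
    apply Rlt_le_trans with (d / eta * eta). apply Rmult_lt_compat_l; auto.
    right; field; lra. }
  exists (bscal (/ s) y'). intros n. specialize (Hy' n). simpl in Hy'.
  rewrite zpow_scal.
  assert (x n = bscal (/ s) (bscal s (x n))) as ->.
  { rewrite bscal_assoc, Rinv_l, bscal_one; [reflexivity|lra]. }
  rewrite sub_scal, bnorm_scal, Rabs_right.
  2: { left; apply Rinv_0_lt_compat; auto. }
  apply Rlt_le_trans with (/ s * 1).
  apply Rmult_lt_compat_l; auto. apply Rinv_0_lt_compat; auto.
  unfold s. right. field. lra.
Qed.

End Shad.

Section Prod.
Context (B : RBanach).

Definition p_add (p q : B * B) : B * B := (badd (fst p) (fst q), badd (snd p) (snd q)).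
Definition p_scal (a : R) (p : B * B) : B * B := (bscal a (fst p), bscal a (snd p)).
Definition p_opp (p : B * B) : B * B := (bopp (fst p), bopp (snd p)).
Definition p_norm (p : B * B) : R := bnorm (fst p) + bnorm (snd p).

Lemma p_complete : forall u : nat -> B * B,
    (forall eps, eps > 0 -> exists N, forall m n, (m >= N)%nat -> (n >= N)%nat ->
        p_norm (p_add (u m) (p_opp (u n))) < eps) ->
    exists l, forall eps, eps > 0 -> exists N, forall n, (n >= N)%nat ->
        p_norm (p_add (u n) (p_opp l)) < eps.
Proof.
  intros u Hu. unfold p_norm, p_add, p_opp in *; simpl in *.
  destruct (bcomplete B (fun n => fst (u n))) as [l1 H1].
  { intros eps He. destruct (Hu eps He) as [N HN]. exists N. intros m n Hm Hn.
    specialize (HN m n Hm Hn). pose proof (bnorm_nonneg (badd (snd (u m)) (bopp (snd (u n))))). lra. }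
  destruct (bcomplete B (fun n => snd (u n))) as [l2 H2].
  { intros eps He. destruct (Hu eps He) as [N HN]. exists N. intros m n Hm Hn.
    specialize (HN m n Hm Hn). pose proof (bnorm_nonneg (badd (fst (u m)) (bopp (fst (u n))))). lra. }
  exists (l1, l2). intros eps He.
  destruct (H1 (eps/2)) as [N1 HN1]. lra.
  destruct (H2 (eps/2)) as [N2 HN2]. lra.
  exists (Nat.max N1 N2). intros n Hn. simpl.
  specialize (HN1 n ltac:(lia)). specialize (HN2 n ltac:(lia)). lra.
Qed.

Definition B2 : RBanach.
Proof.
  refine {| bcar := B * B; bzero := (bzero, bzero); badd := p_add; bopp := p_opp;
            bscal := p_scal; bnorm := p_norm; bcomplete := p_complete |};
  unfold p_add, p_opp, p_scal, p_norm; simpl.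
  - intros; f_equal; apply badd_assoc.
  - intros; f_equal; apply badd_comm.
  - intros [x y]; simpl; f_equal; apply badd_zero.
  - intros [x y]; simpl; f_equal; apply badd_opp.
  - intros [x y]; simpl; f_equal; apply bscal_one.
  - intros; f_equal; apply bscal_assoc.
  - intros; f_equal; apply bscal_distr_l.
  - intros; f_equal; apply bscal_distr_r.
  - intros; pose proof (bnorm_nonneg (fst x)); pose proof (bnorm_nonneg (snd x)); lra.
  - intros [x y]; simpl; intros H.
    pose proof (bnorm_nonneg x); pose proof (bnorm_nonneg y).
    f_equal; apply bnorm_eq0; lra.
  - intros; rewrite !bnorm_scal; ring.
  - intros; pose proof (bnorm_triangle (fst x) (fst y)); pose proof (bnorm_triangle (snd x) (snd y)); lra.
Defined.

End Prod.

Lemma abs_sin_le x : Rabs (sin x) <= Rabs x.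
Proof.
  assert (H : forall x, 0 <= x -> Rabs (sin x) <= x).
  { intros y Hy. destruct (Req_dec y 0) as [->|Hne]. rewrite sin_0, Rabs_R0; lra.
    pose proof (sin_lt_x y ltac:(lra)). pose proof (SIN_bound y). pose proof PI2_1.
    destruct (Rle_lt_dec 1 y).
    - apply Rabs_le; lra.
    - pose proof (sin_ge_0 y Hy ltac:(lra)). rewrite Rabs_right; lra. }
  destruct (Rle_lt_dec 0 x).
  - rewrite (Rabs_right x) by lra; auto.
  - replace x with (- (- x)) by ring. rewrite sin_neg, Rabs_Ropp, Rabs_Ropp.
    rewrite (Rabs_right (-x)) by lra. apply H; lra.
Qed.

Lemma cos_lip a b : Rabs (cos a - cos b) <= Rabs (a - b).
Proof.
  rewrite form2. rewrite !Rabs_mult.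
  pose proof (abs_sin_le ((a - b)/2)). pose proof (SIN_bound ((a+b)/2)).
  assert (Rabs (sin ((a + b) / 2)) <= 1) by (apply Rabs_le; lra).
  replace ((a - b)/2) with ((a-b) * /2) in H by field.
  rewrite Rabs_mult, (Rabs_right (/2)) in H by lra.
  replace (Rabs (-2)) with 2 by (rewrite Rabs_left; lra).
  pose proof (Rabs_pos (sin ((a - b) / 2))). pose proof (Rabs_pos (sin ((a + b) / 2))).
  nra.
Qed.

Lemma sin_lip a b : Rabs (sin a - sin b) <= Rabs (a - b).
Proof.
  rewrite form4. rewrite !Rabs_mult.
  pose proof (abs_sin_le ((a - b)/2)). pose proof (COS_bound ((a+b)/2)).
  assert (Rabs (cos ((a + b) / 2)) <= 1) by (apply Rabs_le; lra).
  replace ((a - b)/2) with ((a-b) * /2) in H by field.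
  rewrite Rabs_mult, (Rabs_right (/2)) in H by lra.
  replace (Rabs 2) with 2 by (rewrite Rabs_right; lra).
  pose proof (Rabs_pos (sin ((a - b) / 2))). pose proof (Rabs_pos (cos ((a + b) / 2))).
  nra.
Qed.

Section Ops.
Context {B : RBanach}.

Definition combo (x y : B) (a b : R) : B := badd (bscal a x) (bscal b y).

Lemma add4 (a b c d : B) : badd (badd a b) (badd c d) = badd (badd a c) (badd b d).
Proof. rewrite <- !badd_assoc; f_equal; apply add_swap. Qed.

Lemma combo_combo x y a b c d e f :
  combo (combo x y a b) (combo x y c d) e f = combo x y (e*a+f*c) (e*b+f*d).
Proof.
  unfold combo. rewrite !bscal_distr_l, !bscal_assoc, add4, !bscal_distr_r; reflexivity.
Qed.

Lemma combo_add x y x' y' a b :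
  combo (badd x x') (badd y y') a b = badd (combo x y a b) (combo x' y' a b).
Proof. unfold combo. rewrite !bscal_distr_l, add4; reflexivity. Qed.

Lemma combo_scal x y c a b : combo (bscal c x) (bscal c y) a b = bscal c (combo x y a b).
Proof.
  unfold combo. rewrite bscal_distr_l, !bscal_assoc, (Rmult_comm a c), (Rmult_comm b c); reflexivity.
Qed.

Lemma combo_sub x y a b c d : bsub (combo x y a b) (combo x y c d) = combo x y (a - c) (b - d).
Proof.
  unfold combo, bsub. rewrite opp_add, !opp_scal', add4, <- !bscal_distr_r; reflexivity.
Qed.

Lemma combo_norm x y a b : bnorm (combo x y a b) <= Rabs a * bnorm x + Rabs b * bnorm y.
Proof. unfold combo. rewrite <- !bnorm_scal. apply bnorm_triangle. Qed.

Lemma combo_10 x y : combo x y 1 0 = x.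
Proof. unfold combo. rewrite scal0l, badd_zero, bscal_one; reflexivity. Qed.
Lemma combo_01 x y : combo x y 0 1 = y.
Proof. unfold combo. rewrite scal0l, add0l, bscal_one; reflexivity. Qed.

Lemma combo_lin (f : B -> B) : additive f -> homog f ->
  forall x y a b, f (combo x y a b) = combo (f x) (f y) a b.
Proof. intros Ha Hh x y a b. unfold combo. rewrite Ha, !Hh; reflexivity. Qed.

Definition Rot (t : R) (p : B2 B) : B2 B :=
  (combo (fst p) (snd p) (cos t) (- sin t), combo (fst p) (snd p) (sin t) (cos t)).

Lemma Rot_Rot a b p : Rot a (Rot b p) = Rot (a + b) p.
Proof.
  destruct p as [x y]. unfold Rot; simpl. rewrite !combo_combo, cos_plus, sin_plus.
  f_equal; f_equal; ring.
Qed.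

Lemma Rot_0 p : Rot 0 p = p.
Proof.
  destruct p as [x y]. unfold Rot; simpl. rewrite cos_0, sin_0, Ropp_0, combo_10, combo_01.
  reflexivity.
Qed.

Lemma Rot_add t : @additive (B2 B) (Rot t).
Proof. intros [x y] [x' y']. unfold Rot; simpl. unfold p_add; simpl. rewrite !combo_add; reflexivity. Qed.

Lemma Rot_homog t : @homog (B2 B) (Rot t).
Proof. intros c [x y]. unfold Rot; simpl. unfold p_scal; simpl. rewrite !combo_scal; reflexivity. Qed.

Lemma Rot_norm t p : bnorm (Rot t p) <= 2 * bnorm p.
Proof.
  destruct p as [x y]. simpl. unfold p_norm; simpl.
  pose proof (combo_norm x y (cos t) (- sin t)). pose proof (combo_norm x y (sin t) (cos t)).
  pose proof (COS_bound t). pose proof (SIN_bound t).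
  assert (Rabs (cos t) <= 1) by (apply Rabs_le; lra).
  assert (Rabs (sin t) <= 1) by (apply Rabs_le; lra).
  rewrite Rabs_Ropp in H.
  pose proof (bnorm_nonneg x). pose proof (bnorm_nonneg y).
  pose proof (Rabs_pos (cos t)). pose proof (Rabs_pos (sin t)).
  nra.
Qed.

Lemma Rot_diff a b p : bnorm (bsub (Rot a p) (Rot b p)) <= 4 * Rabs (a - b) * bnorm p.
Proof.
  destruct p as [x y]. simpl. unfold p_norm, p_add, p_opp; simpl.
  fold (bsub (combo x y (cos a) (- sin a)) (combo x y (cos b) (- sin b))).
  fold (bsub (combo x y (sin a) (cos a)) (combo x y (sin b) (cos b))).
  rewrite !combo_sub.
  pose proof (combo_norm x y (cos a - cos b) (- sin a - - sin b)).
  pose proof (combo_norm x y (sin a - sin b) (cos a - cos b)).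
  replace (- sin a - - sin b) with (- (sin a - sin b)) in H by ring.
  rewrite Rabs_Ropp in H.
  replace (- sin a - - sin b) with (- (sin a - sin b)) by ring.
  pose proof (cos_lip a b). pose proof (sin_lip a b).
  pose proof (bnorm_nonneg x). pose proof (bnorm_nonneg y).
  pose proof (Rmult_le_compat_r _ _ _ H3 H1).
  pose proof (Rmult_le_compat_r _ _ _ H4 H1).
  pose proof (Rmult_le_compat_r _ _ _ H3 H2).
  pose proof (Rmult_le_compat_r _ _ _ H4 H2).
  pose proof (Rmult_le_pos _ _ (Rabs_pos (a - b)) H3).
  pose proof (Rmult_le_pos _ _ (Rabs_pos (a - b)) H4).
  lra.
Qed.

End Ops.

Section Op.
Context {B : RBanach} (T S : B -> B).
Hypothesis Haut : is_aut_with_inverse T S.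

Lemma T_add : additive T. Proof. destruct Haut as [[H _] _]; exact H. Qed.
Lemma T_hom : homog T. Proof. destruct Haut as [[_ [H _]] _]; exact H. Qed.
Lemma S_add : additive S. Proof. destruct Haut as [_ [[H _] _]]; exact H. Qed.
Lemma S_hom : homog S. Proof. destruct Haut as [_ [[_ [H _]] _]]; exact H. Qed.

Definition TC (p : B2 B) : B2 B := (T (fst p), T (snd p)).
Definition SC (p : B2 B) : B2 B := (S (fst p), S (snd p)).

Lemma TC_add : additive TC.
Proof. intros [x y] [x' y']. unfold TC; simpl; unfold p_add; simpl. rewrite !T_add; reflexivity. Qed.
Lemma TC_hom : homog TC.
Proof. intros c [x y]. unfold TC; simpl; unfold p_scal; simpl. rewrite !T_hom; reflexivity. Qed.
Lemma SC_add : additive SC.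
Proof. intros [x y] [x' y']. unfold SC; simpl; unfold p_add; simpl. rewrite !S_add; reflexivity. Qed.
Lemma SC_hom : homog SC.
Proof. intros c [x y]. unfold SC; simpl; unfold p_scal; simpl. rewrite !S_hom; reflexivity. Qed.

Lemma iterC k (y1 y2 : B) : Nat.iter k TC (y1, y2) = (Nat.iter k T y1, Nat.iter k T y2).
Proof. induction k. reflexivity. change (TC (Nat.iter k TC (y1, y2)) = (T (Nat.iter k T y1), T (Nat.iter k T y2))). rewrite IHk; reflexivity. Qed.
Lemma iterSC k (y1 y2 : B) : Nat.iter k SC (y1, y2) = (Nat.iter k S y1, Nat.iter k S y2).
Proof. induction k. reflexivity. change (SC (Nat.iter k SC (y1, y2)) = (S (Nat.iter k S y1), S (Nat.iter k S y2))). rewrite IHk; reflexivity. Qed.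

Lemma zpowC n (y1 y2 : B) : zpow TC SC n ((y1, y2) : B2 B) = (zpow T S n y1, zpow T S n y2).
Proof. destruct n; simpl; auto. apply iterC. apply iterSC. Qed.

Lemma TC_Rot t p : TC (Rot t p) = Rot t (TC p).
Proof.
  destruct p as [x y]; unfold TC, Rot; simpl.
  rewrite !(combo_lin T T_add T_hom); reflexivity.
Qed.

Lemma shadowC : shadowing_property T S -> shadowing_property TC SC.
Proof.
  intros Hs eps He. destruct (Hs (eps/2)) as [d [Hd Hsh]]. lra.
  exists d; split; auto. intros z Hz.
  destruct (Hsh (fun n => fst (z n))) as [y1 H1].
  { intros n. specialize (Hz n). unfold bsub in Hz; simpl in Hz; unfold p_norm in Hz; simpl in Hz.
    pose proof (bnorm_nonneg (badd (snd (z (n + 1)%Z)) (bopp (T (snd (z n)))))). unfold bsub. lra. }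
  destruct (Hsh (fun n => snd (z n))) as [y2 H2].
  { intros n. specialize (Hz n). unfold bsub in Hz; simpl in Hz; unfold p_norm in Hz; simpl in Hz.
    pose proof (bnorm_nonneg (badd (fst (z (n + 1)%Z)) (bopp (T (fst (z n)))))). unfold bsub. lra. }
  exists ((y1, y2) : B2 B). intros n. rewrite zpowC.
  specialize (H1 n); specialize (H2 n). unfold bsub in *; simpl; unfold p_norm; simpl. lra.
Qed.

Lemma cshift_eq t p : complexified_shift T (cos t) (sin t) p = bsub (TC p) (Rot t p).
Proof.
  destruct p as [x y]. unfold complexified_shift, bsub, TC, Rot; simpl. unfold p_add, p_opp; simpl.
  unfold combo. rewrite !opp_add, !opp_scal', Ropp_involutive, !badd_assoc. reflexivity.
Qed.

Lemma TC_bound : exists C, C >= 0 /\ forall p, bnorm (TC p) <= C * bnorm p.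
Proof.
  destruct Haut as [[_ [_ [C HC]]] _].
  exists (Rabs C). split. apply Rle_ge, Rabs_pos.
  intros [x y]. unfold TC; simpl; unfold p_norm; simpl.
  pose proof (HC x); pose proof (HC y).
  pose proof (Rle_abs C). pose proof (bnorm_nonneg x). pose proof (bnorm_nonneg y).
  pose proof (Rmult_le_compat_r _ _ _ H2 H1). pose proof (Rmult_le_compat_r _ _ _ H3 H1).
  lra.
Qed.

End Op.

Section Avg.
Context {E : RBanach}.

Lemma add_lin (f g : E -> E) : additive f -> additive g -> additive (fun p => bsub (f p) (g p)).
Proof. intros Hf Hg x y. rewrite Hf, Hg, sub_add_add; reflexivity. Qed.
Lemma hom_lin (f g : E -> E) : homog f -> homog g -> homog (fun p => bsub (f p) (g p)).
Proof. intros Hf Hg a x. rewrite Hf, Hg, sub_scal; reflexivity. Qed.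

Lemma sumN_ext (f g : nat -> E) n : (forall k, f k = g k) -> sumN f n = sumN g n.
Proof. intros H; induction n; simpl; auto. rewrite IHn, H; reflexivity. Qed.

Lemma avg_L (L : E -> E) (u g : nat -> E) (r : E) (N : nat) :
  additive L -> homog L -> (N > 0)%nat ->
  (forall n, bsub (L (u n)) r = bsub (g (S n)) (g n)) ->
  bsub (L (bscal (/ INR N) (sumN u N))) r = bscal (/ INR N) (bsub (g N) (g O)).
Proof.
  intros Ha Hh HN H.
  assert (HN' : INR N <> 0) by (apply not_0_INR; lia).
  assert (Hr : bscal (/ INR N) (sumN (fun _ => r) N) = r).
  { rewrite sumN_const, bscal_assoc, Rinv_l, bscal_one; auto. }
  rewrite Hh. rewrite <- Hr. rewrite sub_scal, (sumN_lin L u N Ha Hh), <- sumN_sub.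
  rewrite <- sumN_tele. f_equal. apply sumN_ext. auto.
Qed.

Lemma avg_near (u : nat -> E) p N M : (N > 0)%nat -> (forall n, (n < N)%nat -> bnorm (bsub (u n) p) <= M) ->
  bnorm (bsub (bscal (/ INR N) (sumN u N)) p) <= M.
Proof.
  intros HN H.
  assert (HN' : 0 < INR N) by (apply lt_0_INR; lia).
  assert (Hr : bscal (/ INR N) (sumN (fun _ => p) N) = p).
  { rewrite sumN_const, bscal_assoc, Rinv_l, bscal_one; auto; lra. }
  rewrite <- Hr. rewrite sub_scal, <- sumN_sub, bnorm_scal.
  rewrite Rabs_right by (left; apply Rinv_0_lt_compat; auto).
  pose proof (sumN_norm (fun k => bsub (u k) p) N M H).
  apply Rmult_le_reg_l with (INR N); auto.
  rewrite <- Rmult_assoc, Rinv_r by lra. lra.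
Qed.

Lemma small_zero (v : E) : (forall e, e > 0 -> bnorm v < e) -> v = bzero.
Proof.
  intros H. apply bnorm_eq0. pose proof (bnorm_nonneg v).
  destruct (Req_dec (bnorm v) 0); auto.
  specialize (H (bnorm v / 2) ltac:(lra)). lra.
Qed.

Lemma sub_sub_swap (a b c : E) : bsub (bsub a b) c = bsub (bsub a c) b.
Proof. unfold bsub. rewrite <- !badd_assoc, (badd_comm (bopp b)); reflexivity. Qed.

End Avg.

Lemma zof_nat_iter {E : RBanach} (T S : E -> E) n y : zpow T S (Z.of_nat n) y = Nat.iter n T y.
Proof. destruct n; simpl; auto. rewrite SuccNat2Pos.id_succ; reflexivity. Qed.

Section Main.
Context {B : RBanach} (T Si : B -> B).
Hypothesis Haut : is_aut_with_inverse T Si.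
Hypothesis Hsh : shadowing_property T Si.

Notation E2 := (B2 B).
Notation TC := (TC T).
Notation SC := (SC Si).

Definition L (t : R) (p : E2) : E2 := bsub (TC p) (Rot t p).

Lemma L_add t : additive (L t).
Proof. apply add_lin. apply (TC_add T Si Haut). apply Rot_add. Qed.
Lemma L_hom t : homog (L t).
Proof. apply hom_lin. apply (TC_hom T Si Haut). apply Rot_homog. Qed.

Lemma L_bound : exists C, C >= 0 /\ forall t p, bnorm (L t p) <= C * bnorm p.
Proof.
  destruct (TC_bound T Si Haut) as [C [HC H]]. exists (C + 2). split. lra.
  intros t p. unfold L. eapply Rle_trans. apply norm_sub_tri with (y := bzero).
  rewrite sub0r. unfold bsub at 1. rewrite add0l, norm_opp.
  pose proof (H p). pose proof (Rot_norm t p). lra.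
Qed.

Lemma shadK : exists K, K > 0 /\
  forall eta, eta > 0 -> forall x : Z -> E2, (forall n, bnorm (bsub (x (n+1)%Z) (TC (x n))) < eta) ->
  exists y, forall n : nat, bnorm (bsub (x (Z.of_nat n)) (Nat.iter n TC y)) < K * eta.
Proof.
  destruct (shadow_scaled TC SC (TC_hom T Si Haut) (SC_hom T Si Haut)
     (shadowC T Si Hsh)) as [K [HK H]].
  exists K; split; auto. intros eta He x Hx. destruct (H eta He x Hx) as [y Hy].
  exists y. intros n. rewrite <- (zof_nat_iter TC SC). apply Hy.
Qed.


Lemma nat_large x : exists n : nat, x < INR n.
Proof.
  destruct (archimed x) as [H1 _].
  destruct (Z_lt_le_dec (up x) 0).
  - exists O. simpl. apply Rlt_trans with (IZR (up x)); auto. apply IZR_lt in l. auto.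
  - exists (Z.to_nat (up x)). rewrite INR_IZR_INZ, Z2Nat.id; auto.
Qed.

Fixpoint Xs (t : R) (r : E2) (n : nat) : E2 :=
  match n with O => bzero | S k => bsub (TC (Xs t r k)) (Rot (INR k * t) r) end.

Lemma Xs_S t r k : Xs t r (S k) = bsub (TC (Xs t r k)) (Rot (INR k * t) r).
Proof. reflexivity. Qed.

Lemma L_bij t : (exists c, c > 0 /\ forall p, c * bnorm p <= bnorm (L t p)) ->
  (forall p q, L t p = L t q -> p = q) /\ (forall r, exists p, L t p = r).
Proof.
  intros [c [Hc Hbb]]. split.
  { intros p q Hpq. apply sub_eq0. specialize (Hbb (bsub p q)).
    rewrite (lin_sub _ (L_add t) (L_hom t)), Hpq, sub_self, norm0 in Hbb.
    pose proof (bnorm_nonneg (bsub p q)).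
    assert (c * bnorm (bsub p q) = 0) by (pose proof (Rmult_le_pos c _ (Rlt_le _ _ Hc) H); lra).
    apply Rmult_integral in H0. destruct H0; auto. lra. }
  intros r.
  destruct shadK as [K [HK Hshad]].
  assert (Hr0 : 0 <= bnorm r) by apply bnorm_nonneg.
  destruct (Hshad (2 * bnorm r + 1) ltac:(lra) (fun z => Xs t r (Z.to_nat z))) as [y Hy].
  { intros z. destruct (Z_lt_le_dec z 0).
    - replace (Z.to_nat (z + 1)) with O by lia. replace (Z.to_nat z) with O by lia.
      change (bnorm (bsub (@bzero E2) (TC (@bzero E2))) < 2 * bnorm r + 1). rewrite (lin_zero _ (TC_hom T Si Haut)), sub_self, norm0. lra.
    - replace (Z.to_nat (z + 1)) with (S (Z.to_nat z)) by lia. rewrite Xs_S.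
      rewrite sub_sub_swap, sub_self. unfold bsub at 1. rewrite add0l, norm_opp.
      pose proof (Rot_norm (INR (Z.to_nat z) * t) r). lra. }
  set (D := K * (2 * bnorm r + 1)) in *.
  assert (HD : D > 0) by (unfold D; apply Rmult_lt_0_compat; lra).
  set (w := fun n => bsub (Xs t r n) (Nat.iter n TC y)).
  assert (Hw : forall n, bnorm (w n) <= D).
  { intros n. specialize (Hy n). rewrite Nat2Z.id in Hy. unfold w. lra. }
  set (u := fun n => Rot (- (INR n * t)) (w n)).
  set (g := fun n => Rot t (u n)).
  assert (Hg : forall n, bnorm (g n) <= 4 * D).
  { intros n. unfold g, u. pose proof (Rot_norm t (Rot (- (INR n * t)) (w n))).
    pose proof (Rot_norm (- (INR n * t)) (w n)). pose proof (Hw n). lra. }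
  assert (Hid : forall n, bsub (L t (u n)) r = bsub (g (S n)) (g n)).
  { intros n. unfold L. fold (g n). rewrite sub_sub_swap. f_equal.
    unfold g, u. rewrite Rot_Rot.
    replace (t + - (INR (S n) * t)) with (- (INR n * t)) by (rewrite S_INR; ring).
    assert (w (S n) = bsub (TC (w n)) (Rot (INR n * t) r)) as ->.
    { unfold w. rewrite Xs_S. rewrite sub_sub_swap. f_equal.
      rewrite (lin_sub _ (TC_add T Si Haut) (TC_hom T Si Haut)). reflexivity. }
    rewrite (lin_sub _ (Rot_add _) (Rot_homog _)), Rot_Rot, (TC_Rot T Si Haut).
    replace (- (INR n * t) + INR n * t) with 0 by ring. rewrite Rot_0. reflexivity. }
  set (a := fun k => bscal (/ INR (S k)) (sumN u (S k))).
  assert (Ha : forall k, bnorm (bsub (L t (a k)) r) <= 8 * D / INR (S k)).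
  { intros k. unfold a. rewrite (avg_L (L t) u g r (S k) (L_add t) (L_hom t) ltac:(lia) Hid).
    rewrite bnorm_scal. pose proof (lt_0_INR (S k) ltac:(lia)).
    rewrite Rabs_right by (left; apply Rinv_0_lt_compat; auto).
    pose proof (norm_sub_tri (g (S k)) bzero (g O)).
    rewrite sub0r in H0. unfold bsub at 2 in H0. rewrite add0l, norm_opp in H0.
    pose proof (Hg (S k)); pose proof (Hg O).
    unfold Rdiv. rewrite (Rmult_comm (8 * D)). apply Rmult_le_compat_l.
    left; apply Rinv_0_lt_compat; auto. lra. }
  destruct (bcomplete E2 a) as [l Hl].
  { intros e He. destruct (nat_large (16 * D / (c * e))) as [N HN].
    exists N. intros m n Hm Hn.
    change (bnorm (bsub (a m) (a n)) < e).
    apply Rmult_lt_reg_l with c; auto.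
    eapply Rle_lt_trans. apply Hbb.
    rewrite (lin_sub _ (L_add t) (L_hom t)).
    eapply Rle_lt_trans. apply (norm_sub_tri _ r).
    rewrite (norm_sub_sym r).
    pose proof (Ha m); pose proof (Ha n).
    assert (HNp : 0 < INR N).
    { apply Rle_lt_trans with (16 * D / (c * e)); auto.
      left; apply Rdiv_lt_0_compat; nra. }
    assert (8 * D / INR (S m) <= 8 * D / INR N).
    { unfold Rdiv. apply Rmult_le_compat_l. lra. apply Rinv_le_contravar; auto.
      apply le_INR; lia. }
    assert (8 * D / INR (S n) <= 8 * D / INR N).
    { unfold Rdiv. apply Rmult_le_compat_l. lra. apply Rinv_le_contravar; auto.
      apply le_INR; lia. }
    assert (16 * D / INR N < c * e).
    { apply (Rmult_lt_reg_r (INR N)); auto. unfold Rdiv.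
      rewrite Rmult_assoc, Rinv_l by lra.
      apply (Rmult_lt_reg_l (/ (c * e))). apply Rinv_0_lt_compat; nra.
      replace (/ (c * e) * (c * e * INR N)) with (INR N) by (field; lra).
      unfold Rdiv in HN. lra. }
    unfold Rdiv in *. lra. }
  exists l. apply sub_eq0.
  assert (bsub (L t l) r = bzero) as ->; [|apply norm0].
  apply small_zero. intros e He.
  destruct L_bound as [C [HC HLC]].
  destruct (Hl (e / (2 * (C + 1)))) as [N1 HN1].
  { apply Rdiv_lt_0_compat; lra. }
  destruct (nat_large (16 * D / e)) as [N2 HN2].
  set (n := Nat.max N1 N2).
  specialize (HN1 n ltac:(lia)). change (bnorm (bsub (a n) l) < e / (2 * (C + 1))) in HN1.
  eapply Rle_lt_trans. apply (norm_sub_tri _ (L t (a n))).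
  rewrite <- (lin_sub _ (L_add t) (L_hom t)).
  pose proof (HLC t (bsub l (a n))). rewrite norm_sub_sym in H.
  pose proof (Ha n).
  assert (HN2p : 0 < INR N2).
  { apply Rle_lt_trans with (16 * D / e); auto. left; apply Rdiv_lt_0_compat; lra. }
  assert (8 * D / INR (S n) < e / 2).
  { apply Rle_lt_trans with (8 * D / INR N2).
    unfold Rdiv. apply Rmult_le_compat_l. lra. apply Rinv_le_contravar; auto.
    apply le_INR; unfold n; lia.
    apply (Rmult_lt_reg_r (INR N2)); auto. unfold Rdiv.
    rewrite Rmult_assoc, Rinv_l by lra.
    apply (Rmult_lt_reg_l (/ e)). apply Rinv_0_lt_compat; lra.
    replace (/ e * (e * / 2 * INR N2)) with (INR N2 / 2) by (field; lra).
    unfold Rdiv in HN2. lra. }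
  assert (C * bnorm (bsub (a n) l) <= C * (e / (2 * (C + 1)))).
  { apply Rmult_le_compat_l; lra. }
  assert (C * (e / (2 * (C + 1))) < e / 2).
  { unfold Rdiv. apply (Rmult_lt_reg_r (2 * (C + 1))). lra.
    replace (C * (e * / (2 * (C + 1))) * (2 * (C + 1))) with (C * e) by (field; lra).
    replace (e * / 2 * (2 * (C + 1))) with (C * e + e) by field. lra. }
  lra.
Qed.


Definition Pp (t : R) := forall eta, eta > 0 -> exists p : E2, bnorm p = 1 /\ bnorm (L t p) < eta.

Lemma normalize (v : E2) : bnorm v > 0 -> bnorm (bscal (/ bnorm v) v) = 1.
Proof. intros H. rewrite bnorm_scal, Rabs_right. field; lra. left; apply Rinv_0_lt_compat; auto. Qed.

Lemma step : exists c, c > 0 /\ forall th th', Pp th -> Rabs (th' - th) <= c -> Pp th'.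
Proof.
  destruct shadK as [K [HK Hshad]].
  exists (/ (80 * K)). split. apply Rinv_0_lt_compat; lra.
  set (c := / (80 * K)).
  assert (Hc : c > 0) by (apply Rinv_0_lt_compat; lra).
  assert (HKc : K * (10 * c) = 1/8) by (unfold c; field; lra).
  intros th th' HP Hd eta Heta.
  destruct (HP c Hc) as [p [Hp1 Hp2]].
  destruct (Hshad (10 * c) ltac:(lra) (fun n => Rot (IZR n * th') p)) as [y Hy].
  { intros n.
    replace (Rot (IZR (n + 1) * th') p) with (Rot (IZR n * th') (Rot th' p)).
    2: { rewrite Rot_Rot, plus_IZR. f_equal; ring. }
    rewrite (TC_Rot T Si Haut), <- (lin_sub _ (Rot_add _) (Rot_homog _)).
    eapply Rle_lt_trans. apply Rot_norm.
    pose proof (norm_sub_tri (Rot th' p) (Rot th p) (TC p)).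
    pose proof (Rot_diff th' th p). rewrite Hp1 in H0.
    unfold L in Hp2. rewrite norm_sub_sym in Hp2. lra. }
  rewrite HKc in Hy.
  set (u := fun n => Rot (- (INR n * th')) (Nat.iter n TC y)).
  assert (Hu : forall n, bnorm (bsub (u n) p) <= 1/4).
  { intros n. specialize (Hy n). rewrite <- INR_IZR_INZ in Hy.
    unfold u. replace p with (Rot (- (INR n * th')) (Rot (INR n * th') p)) at 1.
    2: { rewrite Rot_Rot. replace (- (INR n * th') + INR n * th') with 0 by ring. apply Rot_0. }
    rewrite <- (lin_sub _ (Rot_add _) (Rot_homog _)).
    eapply Rle_trans. apply Rot_norm. rewrite norm_sub_sym. lra. }
  set (g := fun n => Rot th' (u n)).
  assert (Hg : forall n, bnorm (g n) <= 5/2).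
  { intros n. unfold g. eapply Rle_trans. apply Rot_norm.
    pose proof (norm_rev (u n) p). specialize (Hu n). lra. }
  assert (Hid : forall n, bsub (L th' (u n)) bzero = bsub (g (S n)) (g n)).
  { intros n. rewrite sub0r. unfold L. fold (g n). f_equal.
    unfold g, u. rewrite Rot_Rot.
    replace (th' + - (INR (S n) * th')) with (- (INR n * th')) by (rewrite S_INR; ring).
    change (Nat.iter (S n) TC y) with (TC (Nat.iter n TC y)).
    rewrite (TC_Rot T Si Haut). reflexivity. }
  destruct (nat_large (8 / eta)) as [N HN].
  set (v := bscal (/ INR (S N)) (sumN u (S N))).
  assert (Hv : bnorm (bsub v p) <= 1/4) by (apply avg_near; auto; lia).
  assert (Hv2 : bnorm v >= 3/4).
  { pose proof (norm_rev p v). rewrite norm_sub_sym in H. lra. }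
  assert (HLv : bnorm (L th' v) <= 5 / INR (S N)).
  { pose proof (avg_L (L th') u g bzero (S N) (L_add th') (L_hom th') ltac:(lia) Hid).
    fold v in H. rewrite sub0r in H. rewrite H, bnorm_scal.
    pose proof (lt_0_INR (S N) ltac:(lia)).
    rewrite Rabs_right by (left; apply Rinv_0_lt_compat; auto).
    pose proof (norm_sub_tri (g (S N)) bzero (g O)).
    rewrite sub0r in H1. unfold bsub at 2 in H1. rewrite add0l, norm_opp in H1.
    pose proof (Hg (S N)); pose proof (Hg O).
    unfold Rdiv. rewrite (Rmult_comm 5). apply Rmult_le_compat_l.
    left; apply Rinv_0_lt_compat; auto. lra. }
  exists (bscal (/ bnorm v) v). split. apply normalize; lra.
  rewrite (L_hom th'), bnorm_scal, Rabs_right by (left; apply Rinv_0_lt_compat; lra).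
  assert (HSN : INR N < INR (S N)) by (apply lt_INR; lia).
  assert (HNp : 0 < INR N).
  { apply Rle_lt_trans with (8 / eta); auto. left; apply Rdiv_lt_0_compat; lra. }
  assert (/ bnorm v <= 4/3).
  { replace (4/3) with (/ (3/4)) by field. apply Rinv_le_contravar; lra. }
  assert (5 / INR (S N) < 5 / INR N).
  { unfold Rdiv. apply Rmult_lt_compat_l. lra. apply Rinv_lt_contravar; auto. nra. }
  assert (5 / INR N < 3 / 4 * eta).
  { apply (Rmult_lt_reg_r (INR N)); auto. unfold Rdiv. rewrite Rmult_assoc, Rinv_l by lra.
    apply (Rmult_lt_reg_l (/ eta)). apply Rinv_0_lt_compat; lra.
    replace (/ eta * (3 * / 4 * eta * INR N)) with (3/4 * INR N) by (field; lra).
    unfold Rdiv in HN. pose proof (Rinv_0_lt_compat eta Heta). lra. }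
  pose proof (bnorm_nonneg (L th' v)).
  assert (/ bnorm v * bnorm (L th' v) <= 4/3 * bnorm (L th' v)).
  { apply Rmult_le_compat_r; lra. }
  lra.
Qed.

Lemma frac_nonneg k : 0 <= INR k / (INR k + 1).
Proof. pose proof (pos_INR k). unfold Rdiv; apply Rmult_le_pos; auto. left; apply Rinv_0_lt_compat; lra. Qed.

Lemma reach th0 : Pp th0 -> forall th', Pp th'.
Proof.
  intros H0. destruct step as [c [Hc Hst]].
  assert (Hk : forall k th', Rabs (th' - th0) <= INR k * c -> Pp th').
  { induction k; intros th' Hd.
    - simpl in Hd. rewrite Rmult_0_l in Hd. pose proof (Rabs_pos (th' - th0)).
      assert (th' = th0). { assert (Rabs (th' - th0) = 0) by lra.
        destruct (Rcase_abs (th' - th0)); [rewrite Rabs_left in H1 by lra | rewrite Rabs_right in H1 by lra]; lra. }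
      subst; auto.
    - set (th'' := th0 + (th' - th0) * (INR k / (INR k + 1))).
      assert (HSk : 0 < INR (S k)) by (apply lt_0_INR; lia).
      rewrite S_INR in *.
      apply (Hst th'').
      + apply IHk. unfold th''. replace (th0 + (th' - th0) * (INR k / (INR k + 1)) - th0)
          with ((th' - th0) * (INR k / (INR k + 1))) by ring.
        rewrite Rabs_mult, (Rabs_right (INR k / (INR k + 1))).
        2: { apply Rle_ge, frac_nonneg. }
        apply Rle_trans with ((INR k + 1) * c * (INR k / (INR k + 1))).
        apply Rmult_le_compat_r; auto. apply frac_nonneg.
        right; field; lra.
      + unfold th''. replace (th' - (th0 + (th' - th0) * (INR k / (INR k + 1))))
          with ((th' - th0) * / (INR k + 1)) by (field; lra).
        rewrite Rabs_mult, (Rabs_right (/ (INR k + 1))).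
        2: { left; apply Rinv_0_lt_compat; lra. }
        apply Rle_trans with ((INR k + 1) * c * / (INR k + 1)).
        apply Rmult_le_compat_r; auto. left; apply Rinv_0_lt_compat; lra.
        right; field; lra. }
  intros th'. destruct (nat_large (Rabs (th' - th0) / c)) as [k Hk'].
  apply (Hk k). apply Rlt_le. apply (Rmult_lt_reg_r (/ c)). apply Rinv_0_lt_compat; auto.
  rewrite Rmult_assoc, Rinv_r by lra. unfold Rdiv in Hk'. lra.
Qed.

End Main.

Lemma angle_of a b : a * a + b * b = 1 -> exists t, cos t = a /\ sin t = b.
Proof.
  intros H.
  assert (Ha : -1 <= a <= 1) by nra.
  assert (Hs : sqrt (1 - a²) = Rabs b).
  { unfold Rsqr. replace (1 - a * a) with (Rsqr (Rabs b)).
    apply sqrt_Rsqr, Rabs_pos. unfold Rsqr. rewrite <- Rabs_mult, Rabs_right; nra. }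
  destruct (Rle_lt_dec 0 b).
  - exists (acos a). rewrite cos_acos, sin_acos by auto. rewrite Hs, Rabs_right; auto; lra.
  - exists (- acos a). rewrite cos_neg, sin_neg, cos_acos, sin_acos by auto.
    rewrite Hs, Rabs_left; auto; split; auto; ring.
Qed.

Theorem mainTheorem17 (B : RBanach) (T S : B -> B) :
  is_aut_with_inverse T S ->
  shadowing_property T S ->
  ~ hyperbolic T ->
  forall eps : R, eps > 0 ->
    exists x : B, forall n : Z,
      1 - eps < bnorm (zpow T S n x) < 1 + eps.
Proof.
  intros Haut Hsh Hnh eps Heps.
  assert (exists a b, a * a + b * b = 1 /\ in_spectrum T a b) as [a [b [Hab Hsp]]].
  { apply NNPP. intros Hn. apply Hnh. intros a b Hab Hsp. apply Hn. exists a, b; auto. }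
  destruct (angle_of a b Hab) as [t [Hc Hs]]. subst a b.
  assert (HP : Pp T t).
  { intros eta Heta.
    destruct (classic (exists p, bnorm (L T t p) < eta * bnorm p)) as [[p Hp]|Hn].
    - assert (Hpn : bnorm p > 0).
      { pose proof (bnorm_nonneg p). pose proof (bnorm_nonneg (L T t p)).
        destruct (Req_dec (bnorm p) 0); [|lra]. rewrite H1 in Hp. lra. }
      exists (bscal (/ bnorm p) p). split. apply normalize; auto.
      rewrite (L_hom T S Haut), bnorm_scal, Rabs_right by (left; apply Rinv_0_lt_compat; lra).
      apply (Rmult_lt_reg_l (bnorm p)); auto. rewrite <- Rmult_assoc, Rinv_r by lra. lra.
    - exfalso. apply Hsp.
      destruct (L_bij T S Haut Hsh t) as [Hi Hsu].
      { exists eta. split; auto. intros p. apply Rnot_lt_le. intros H. apply Hn. exists p. lra. }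
      split.
      + intros p q Hpq. apply Hi. unfold L. rewrite <- !(cshift_eq T). exact Hpq.
      + intros r. destruct (Hsu r) as [p Hp]. exists p. rewrite (cshift_eq T). exact Hp. }
  pose proof (reach T S Haut Hsh t HP 0) as HP0.
  destruct (Hsh eps Heps) as [d [Hd Hshd]].
  destruct (HP0 (d/2) ltac:(lra)) as [[x y] [Hp1 Hp2]].
  unfold L in Hp2. rewrite Rot_0 in Hp2. simpl in Hp1, Hp2. unfold p_norm in *; simpl in *.
  unfold TC in Hp2; simpl in Hp2.
  assert (Hv : exists v, bnorm v = 1 /\ bnorm (bsub (T v) v) < d).
  { assert (Hw : forall w, bnorm w >= 1/2 -> bnorm (bsub (T w) w) < d/2 ->
       exists v, bnorm v = 1 /\ bnorm (bsub (T v) v) < d).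
    { intros w Hw1 Hw2. exists (bscal (/ bnorm w) w).
      assert (Hwi : 0 < / bnorm w) by (apply Rinv_0_lt_compat; lra).
      split. rewrite bnorm_scal, Rabs_right by lra. field; lra.
      rewrite (T_hom T S Haut), sub_scal, bnorm_scal, Rabs_right by lra.
      apply (Rmult_lt_reg_l (bnorm w)). lra. rewrite <- Rmult_assoc, Rinv_r by lra.
      nra. }
    pose proof (bnorm_nonneg (bsub (T x) x)). pose proof (bnorm_nonneg (bsub (T y) y)).
    destruct (Rle_lt_dec (1/2) (bnorm x)).
    - apply (Hw x); unfold bsub in *; lra.
    - apply (Hw y); unfold bsub in *; lra. }
  destruct Hv as [v [Hv1 Hv2]].
  destruct (Hshd (fun _ => v)) as [z Hz].
  { intros n. rewrite norm_sub_sym. exact Hv2. }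
  exists z. intros n. specialize (Hz n). simpl in Hz.
  pose proof (norm_rev v (zpow T S n z)). pose proof (norm_rev (zpow T S n z) v).
  rewrite norm_sub_sym in H0. lra.
Qed.
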